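(* For every integer $n\ge 0$ there is a surjective $\mathbb{R}$-algebra homomorphism $A_{\mathbb R}\to M_{n+1}(\mathbb{C})$.
   Context: $A_{\mathbb R}=\mathbb{R}\langle x_1,\dots,x_7\rangle/(r_1,\dots,r_7)$ with $r_1=[x_2,x_3]+[x_4,x_5]+[x_6,x_7]$, $r_2=[x_3,x_1]+[x_4,x_6]+[x_7,x_5]$, $r_3=[x_1,x_2]+[x_6,x_5]+[x_7,x_4]$, $r_4=[x_5,x_1]+[x_3,x_7]+[x_6,x_2]$, $r_5=[x_1,x_4]+[x_2,x_7]+[x_3,x_6]$, $r_6=[x_7,x_1]+[x_5,x_3]+[x_2,x_4]$, $r_7=[x_1,x_6]+[x_4,x_3]+[x_5,x_2]$. $M_{n+1}(\mathbb{C})$ is regarded as an $\mathbb{R}$-algebra. *)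

(* Defs.v *)
From HB Require Import structures.
From mathcomp Require Import all_boot all_order all_algebra.
From mathcomp Require Import complex.
From mathcomp Require Import Rstruct.
From Stdlib Require Import Reals.
Set Implicit Arguments. Unset Strict Implicit. Unset Printing Implicit Defensive.
Import Order.TTheory GRing.Theory Num.Theory.
Local Open Scope ring_scope.

Notation RR := Rdefinitions.R.
Notation CC := (complex RR).

(* The generators x_1..x_7 are indexed by 'I_7 (x_{k+1} <-> index k). *)
Definition gen (k : nat) : 'I_7 := inord k.

(* Elements of the free algebra R<x_1,...,x_7>: finite R-linear combinations
   of words (noncommutative monomials) in the generators. *)
Definition word := seq 'I_7.
Definition ncpoly := seq (RR * word).

(* The unique R-algebra homomorphism R<x_1..x_7> -> M_m(C) sending x_i to X i. *)
Definition ev_word (m : nat) (X : 'I_7 -> 'M[CC]_m.+1) (w : word) : 'M[CC]_m.+1 :=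
  \prod_(i <- w) X i.
Definition ev_nc (m : nat) (X : 'I_7 -> 'M[CC]_m.+1) (p : ncpoly) : 'M[CC]_m.+1 :=
  \sum_(t <- p) ((t.1)%:C)%C *: ev_word X t.2.

Definition comm (m : nat) (a b : 'M[CC]_m.+1) := a * b - b * a.

(* The images of the seven defining relations r_1..r_7 of A_R under x_i |-> X i
   (x_j = X (gen (j-1))). *)
Definition rels (m : nat) (X : 'I_7 -> 'M[CC]_m.+1) : seq 'M[CC]_m.+1 :=
  let x j := X (gen j.-1) in
  [:: comm (x 2) (x 3) + comm (x 4) (x 5) + comm (x 6) (x 7);
      comm (x 3) (x 1) + comm (x 4) (x 6) + comm (x 7) (x 5);
      comm (x 1) (x 2) + comm (x 6) (x 5) + comm (x 7) (x 4);
      comm (x 5) (x 1) + comm (x 3) (x 7) + comm (x 6) (x 2);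
      comm (x 1) (x 4) + comm (x 2) (x 7) + comm (x 3) (x 6);
      comm (x 7) (x 1) + comm (x 5) (x 3) + comm (x 2) (x 4);
      comm (x 1) (x 6) + comm (x 4) (x 3) + comm (x 5) (x 2)].

(* A surjective R-algebra homomorphism A_R -> M_{m+1}(C): by the universal
   property of the quotient of the free algebra, it is the same as a choice of
   images X i of the generators killing all relations, such that the induced
   map ev_nc X from the free algebra is onto. *)
Definition surj_hom_from_A (m : nat) : Prop :=
  exists X : 'I_7 -> 'M[CC]_m.+1,
    (forall r, r \in rels X -> r = 0) /\
    (forall M : 'M[CC]_m.+1, exists p : ncpoly, ev_nc X p = M).

(* Main.v *)
Require Import Defs.
From mathcomp Require Import all_boot all_order all_algebra.
From mathcomp Require Import complex Rstruct.
Set Implicit Arguments. Unset Strict Implicit. Unset Printing Implicit Defensive.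
Import Order.TTheory GRing.Theory Num.Theory.
Local Open Scope ring_scope.

Lemma ii : ('i%C * 'i%C : CC) = -1.
Proof. apply/eqP; rewrite eq_complex /=. by rewrite !mul0r !mulr0 mulr1 sub0r addr0 oppr0 !eqxx. Qed.

Lemma commZ m (a b : CC) (P Q : 'M[CC]_m.+1) : comm (a *: P) (b *: Q) = (a * b) *: comm P Q.
Proof. by rewrite /comm scalerBr -!scalerAl -!scalerAr !scalerA [b * a]mulrC. Qed.
Lemma commS m (c : CC) (P : 'M[CC]_m.+1) : comm (c%:M) P = 0.
Proof. by rewrite /comm -!mulmxE mul_scalar_mx mul_mx_scalar subrr. Qed.
Lemma commS' m (c : CC) (P : 'M[CC]_m.+1) : comm P (c%:M) = 0.
Proof. by rewrite /comm -!mulmxE mul_scalar_mx mul_mx_scalar subrr. Qed.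
Lemma commA m (P Q : 'M[CC]_m.+1) : comm Q P = - comm P Q.
Proof. by rewrite /comm opprB. Qed.

Lemma commZl m (a : CC) (P Q : 'M[CC]_m.+1) : comm (a *: P) Q = a *: comm P Q.
Proof. by rewrite /comm scalerBr -scalerAl -scalerAr. Qed.
Lemma commZr m (a : CC) (P Q : 'M[CC]_m.+1) : comm P (a *: Q) = a *: comm P Q.
Proof. by rewrite /comm scalerBr -scalerAl -scalerAr. Qed.
Lemma comm0 m (P : 'M[CC]_m.+1) : comm 0 P = 0.
Proof. by rewrite /comm mul0r mulr0 subrr. Qed.
Lemma comm0' m (P : 'M[CC]_m.+1) : comm P 0 = 0.
Proof. by rewrite /comm mul0r mulr0 subrr. Qed.
Lemma commxx m (P : 'M[CC]_m.+1) : comm P P = 0.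
Proof. by rewrite /comm subrr. Qed.
Section S.
Variable n : nat.
Definition L : 'M[CC]_n.+1 := \matrix_(a, b) ((a == (b:nat).+1 :> nat)%:R).
Definition U : 'M[CC]_n.+1 := L^T.
Definition f (k : nat) : 'M[CC]_n.+1 :=
  match k with
  | 0 => ('i%C)%:M
  | 1 => L
  | 2 => U
  | 3 => 'i%C *: U
  | 4 => (- 'i%C) *: L
  | _ => 0 end.
Definition Xg (i : 'I_7) := f (val i).
Lemma XgE k : (k < 7)%N -> Xg (inord k) = f k.
Proof. by move=> h; rewrite /Xg; congr f; apply: inordK. Qed.

Lemma relsX : forall r, r \in rels Xg -> r = 0.
Proof.
move=> r; rewrite /rels /gen /= !inE.
rewrite !XgE //= !commZl !commZr !comm0 !comm0' !commS !commS' !commxx.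
rewrite !scaler0 !addr0 !add0r scalerA mulrN ii opprK scale1r (commA U L) addNr scaleNr addNr !orbb.
by move/eqP.
Qed.

Lemma LdE (i i' j : 'I_n.+1) : i' = (i:nat).+1 :> nat -> L * delta_mx i j = delta_mx i' j.
Proof.
move=> hi; apply/matrixP => a b; rewrite -mulmxE !mxE (bigD1 i) //= big1 ?addr0.
  rewrite !mxE eqxx /= -natrM mulnb; congr (_ %:R); congr (_ && _).
  by rewrite -val_eqE /= hi.
by move=> c /negbTE nc; rewrite !mxE eq_sym nc /= mulr0.
Qed.

Lemma dUE (i j j' : 'I_n.+1) : j' = (j:nat).+1 :> nat -> delta_mx i j * U = delta_mx i j'.
Proof.
move=> hj; apply/matrixP => a b; rewrite -mulmxE !mxE (bigD1 j) //= big1 ?addr0.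
  rewrite !mxE eqxx /= andbT -natrM mulnb; congr (_ %:R); congr (_ && _).
  by rewrite -val_eqE /= hj.
by move=> c /negbTE nc; rewrite !mxE nc andbF /= mul0r.
Qed.

Lemma E00 : 1 - L * U = delta_mx 0 0.
Proof.
apply/matrixP => a b; rewrite -mulmxE !mxE.
case: a => [[|a'] ha] /=.
  rewrite big1 => [|c _]; last by rewrite !mxE /= mul0r.
  by rewrite subr0 -!val_eqE /= eq_sym.
rewrite (bigD1 (Ordinal (ltnW ha))) //= big1 ?addr0.
  rewrite !mxE /= eqxx mul1r -!val_eqE /= eq_sym subrr; by [].
move=> c hc; rewrite !mxE /=.
have -> : (a'.+1 == (c:nat).+1) = false.
  by rewrite eqSS; apply/negbTE; apply: contra hc => /eqP e; rewrite -val_eqE /= e.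
by rewrite mul0r.
Qed.

Definition SS (M : 'M[CC]_n.+1) := exists p : ncpoly, ev_nc Xg p = M.


Lemma S0 : SS 0.
Proof. by exists [::]; rewrite /ev_nc big_nil. Qed.
Lemma SD P Q : SS P -> SS Q -> SS (P + Q).
Proof. by move=> [p <-] [q <-]; exists (p ++ q); rewrite /ev_nc big_cat. Qed.
Lemma SZ (r : RR) P : SS P -> SS ((r%:C)%C *: P).
Proof.
move=> [p <-]; exists [seq (r * t.1, t.2) | t <- p].
rewrite /ev_nc big_map scaler_sumr; apply: eq_bigr => t _ /=.
by rewrite rmorphM scalerA.
Qed.
Lemma S1 : SS 1.
Proof.
exists [:: (1, [::])]; rewrite /ev_nc big_cons big_nil addr0 /ev_word big_nil /=.
by rewrite rmorph1 scale1r.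
Qed.
Lemma Sl g P : SS P -> SS (Xg g * P).
Proof.
move=> [p <-]; exists [seq (t.1, g :: t.2) | t <- p].
rewrite /ev_nc big_map mulr_sumr; apply: eq_bigr => t _ /=.
by rewrite /ev_word big_cons scalerAr.
Qed.
Lemma Sr g P : SS P -> SS (P * Xg g).
Proof.
move=> [p <-]; exists [seq (t.1, rcons t.2 g) | t <- p].
rewrite /ev_nc big_map mulr_suml; apply: eq_bigr => t _ /=.
by rewrite /ev_word -cats1 big_cat big_seq1 scalerAl.
Qed.
Lemma SrL P : SS P -> SS (P * L).
Proof. by move/(Sr (inord 1)); rewrite XgE. Qed.
Lemma SrU P : SS P -> SS (P * U).
Proof. by move/(Sr (inord 2)); rewrite XgE. Qed.
Lemma SlL P : SS P -> SS (L * P).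
Proof. by move/(Sl (inord 1)); rewrite XgE. Qed.
Lemma Sli P : SS P -> SS ('i%C *: P).
Proof. by move/(Sl (inord 0)); rewrite XgE // /f -mulmxE mul_scalar_mx. Qed.

Lemma Sdelta0 k (hk : (k < n.+1)%N) : SS (delta_mx 0 (Ordinal hk)).
Proof.
elim: k hk => [|k IH] hk.
  have -> : Ordinal hk = 0 by apply/val_inj.
  rewrite -E00; apply: SD; first exact: S1.
  have -> : - (L * U) = ((-1)%:C)%C *: (L * U) by rewrite rmorphN1 scaleN1r.
  by apply/SZ/SrU; rewrite -[L]mul1r; apply/SrL/S1.
rewrite -(@dUE 0 (Ordinal (ltnW hk))) //; exact/SrU/IH.
Qed.

Lemma Sdelta k (hk : (k < n.+1)%N) j : SS (delta_mx (Ordinal hk) j).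
Proof.
elim: k hk => [|k IH] hk.
  have -> : Ordinal hk = 0 by apply/val_inj.
  case: j => j hj; exact: Sdelta0.
rewrite -(@LdE (Ordinal (ltnW hk))) //; exact/SlL/IH.
Qed.

Lemma Sall M : SS M.
Proof.
rewrite (matrix_sum_delta M).
elim/big_ind: _ => [|P Q|i _]; [exact: S0|exact: SD|].
elim/big_ind: _ => [|P Q|j _]; [exact: S0|exact: SD|].
rewrite [M i j]complexE scalerDl -scalerA.
apply: SD; first by apply/SZ; case: i => i hi; exact: Sdelta.
by apply/Sli/SZ; case: i => i hi; exact: Sdelta.
Qed.
End S.

Theorem corollary6p4 : forall n : nat, surj_hom_from_A n.
Proof. move=> n; exists (@Xg n); split; [exact: relsX | exact: Sall]. Qed.
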